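(* Let $k\ge 1$. Let $f, g_1,\ldots,g_k:(-\infty,0)\to\mathbb{R}$ and $s:[0,\infty)\to\mathbb{R}$ be ordinal decreasing functions that are strictly positive at every point of their domains. Consider the recursive algorithm \[ M(x)=\begin{cases} f(x), & x<0,\\ g_1\bigl(-M(x-g_2(-M(x-\cdots-g_k(-M(x-s(x)))\cdots)))\bigr), & x\ge 0.\end{cases} \] Then for every $x\in\mathbb{R}$ the computation of $M(x)$ halts (i.e. the recursion is well-founded and $M(x)$ is a well-defined real number), and the resulting function $M:\mathbb{R}\to\mathbb{R}$ is ordinal decreasing.
   Context: For $D\subseteq\mathbb{R}$ and $h:D\to\mathbb{R}$, a strictly decreasing sequence $x_1>x_2>x_3>\cdots$ of points of $D$ is called $h$-bad if $h(x_1)>h(x_2)>h(x_3)>\cdots$. The function $h$ is called ordinal decreasing if there is no infinite $h$-bad sequence. *)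

(* Defs.v *)
From Stdlib Require Import Reals Lra Lia.
Open Scope R_scope.

Definition ordinal_decreasing (D : R -> Prop) (h : R -> R) : Prop :=
  ~ (exists u : nat -> R,
       (forall n, D (u n)) /\
       (forall n, u (S n) < u n) /\
       (forall n, h (u (S n)) < h (u n))).

(* Big-step operational semantics of the recursive algorithm
     M(x) = f(x)                                   if x < 0
     M(x) = g_1(-M(x - g_2(-M(x - ... - g_k(-M(x - s(x))) ...))))  if x >= 0.
   [Eval x v] : the computation of M(x) halts with output v.
   [Chain x j a] : the j-th nested inner call (1 <= j <= k) halts with value a, where
     the k-th inner call is M(x - s(x)) and the j-th (j < k) is
     M(x - g_{j+1}(-a_{j+1})).
   A call g_i(y) is only defined when y lies in the domain (-oo,0) of g_i. *)
Inductive Eval (k : nat) (f s : R -> R) (g : nat -> R -> R) : R -> R -> Prop :=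
| Eval_neg : forall x, x < 0 -> Eval k f s g x (f x)
| Eval_nonneg : forall x a, 0 <= x -> Chain k f s g x 1 a -> - a < 0 ->
    Eval k f s g x (g 1%nat (- a))
with Chain (k : nat) (f s : R -> R) (g : nat -> R -> R) : R -> nat -> R -> Prop :=
| Chain_base : forall x a, Eval k f s g (x - s x) a -> Chain k f s g x k a
| Chain_step : forall x j b a, (j < k)%nat -> Chain k f s g x (S j) b -> - b < 0 ->
    Eval k f s g (x - g (S j) (- b)) a -> Chain k f s g x j a.

(* Main.v *)
Require Import Defs.
From Stdlib Require Import Reals Lra Lia Classical IndefiniteDescription ClassicalEpsilon.
Open Scope R_scope.

Definition subseq (phi : nat -> nat) := forall n m, (n < m)%nat -> (phi n < phi m)%nat.
Definition sdec (x : nat -> R) := forall n m, (n < m)%nat -> x m < x n.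
Definition ndec (x : nat -> R) := forall n m, (n < m)%nat -> x n <= x m.
Definition sinc (x : nat -> R) := forall n m, (n < m)%nat -> x n < x m.

Lemma subseq_succ phi : (forall i, (phi i < phi (S i))%nat) -> subseq phi.
Proof. intros H n m Hnm. induction Hnm. apply H. specialize (H m). lia. Qed.

Lemma sdec_succ x : (forall i, x (S i) < x i) -> sdec x.
Proof. intros H n m Hnm. induction Hnm. apply H. specialize (H m). lra. Qed.

Lemma ndec_succ x : (forall i, x i <= x (S i)) -> ndec x.
Proof. intros H n m Hnm. induction Hnm. apply H. specialize (H m). lra. Qed.

Lemma le_first x : (forall i, x (S i) < x i) -> forall n, x n <= x 0%nat.
Proof. intros H n. induction n. lra. specialize (H n). lra. Qed.

Lemma subseq_ge phi : subseq phi -> forall n, (n <= phi n)%nat.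
Proof. intros H n. induction n. lia. specialize (H n (S n)). lia. Qed.

Lemma subseq_comp phi psi : subseq phi -> subseq psi -> subseq (fun n => phi (psi n)).
Proof. intros H1 H2 n m Hnm. apply H1, H2, Hnm. Qed.

Lemma sdec_sub x phi : sdec x -> subseq phi -> sdec (fun n => x (phi n)).
Proof. intros H1 H2 n m Hnm. apply H1, H2, Hnm. Qed.

Lemma chain (Rel : nat -> nat -> Prop) n0 :
  (forall n, exists m, (n < m)%nat /\ Rel n m) ->
  exists phi, phi 0%nat = n0 /\ forall i, (phi i < phi (S i))%nat /\ Rel (phi i) (phi (S i)).
Proof.
  intro H. destruct (functional_choice _ H) as [c Hc].
  exists (fun i => Nat.iter i c n0). split. reflexivity.
  intro i. simpl. apply Hc.
Qed.

Lemma mono_sub x : exists phi, subseq phi /\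
  (sdec (fun n => x (phi n)) \/ ndec (fun n => x (phi n))).
Proof.
  destruct (classic (forall N, exists n, (N <= n)%nat /\ forall m, (n < m)%nat -> x m < x n)) as [Hp|Hp].
  - destruct (chain (fun _ m => forall m', (m < m')%nat -> x m' < x m) 0%nat) as [phi [_ Hphi]].
    { intro n. destruct (Hp (S n)) as [m [Hm1 Hm2]]. exists m. split; [lia|exact Hm2]. }
    assert (Hs : subseq phi) by (apply subseq_succ; intro i; apply Hphi).
    exists (fun i => phi (S i)). split.
    + intros n m Hnm. apply Hs. lia.
    + left. intros n m Hnm. apply (proj2 (Hphi n)). apply Hs. lia.
  - apply not_all_ex_not in Hp. destruct Hp as [N HN].
    destruct (chain (fun n m => (N <= n)%nat -> x n <= x m) N) as [phi [H0 Hphi]].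
    { intro n. destruct (Compare_dec.le_lt_dec N n) as [HNn|HNn].
      - destruct (classic (forall m, (n < m)%nat -> x m < x n)) as [Hpk|Hpk].
        + exfalso. apply HN. exists n. auto.
        + apply not_all_ex_not in Hpk. destruct Hpk as [m Hm].
          apply imply_to_and in Hm. destruct Hm as [Hm1 Hm2].
          exists m. split; [exact Hm1|]. intros _. apply Rnot_lt_le. exact Hm2.
      - exists (S n). split; [lia|]. intros; lia. }
    assert (Hs : subseq phi) by (apply subseq_succ; intro i; apply Hphi).
    assert (HNi : forall i, (N <= phi i)%nat).
    { intro i. induction i. lia. specialize (Hphi i). lia. }
    exists phi. split; [exact Hs|]. right. apply ndec_succ. intro i. apply Hphi. apply HNi.
Qed.

Lemma od_inc (D : R -> Prop) h p : ordinal_decreasing D h -> (forall n, D (p n)) ->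
  sdec (fun n => h (p n)) -> exists phi, subseq phi /\ sinc (fun n => p (phi n)).
Proof.
  intros Hod HD Hh. destruct (mono_sub p) as [phi [Hs [Hd|Hn]]].
  - exfalso. apply Hod. exists (fun n => p (phi n)). repeat split.
    + intro n. apply HD.
    + intro n. apply Hd. lia.
    + intro n. apply Hh. apply Hs. lia.
  - exists phi. split; [exact Hs|]. intros n m Hnm.
    destruct (Rle_lt_or_eq_dec _ _ (Hn n m Hnm)) as [Hl|He]; [exact Hl|].
    exfalso. assert (H := Hh _ _ (Hs _ _ Hnm)). simpl in H. rewrite He in H. lra.
Qed.

Lemma inv_pos n : 0 < / INR (S n).
Proof. apply Rinv_0_lt_compat, lt_0_INR. lia. Qed.

Lemma inv_mono n m : (n <= m)%nat -> / INR (S m) <= / INR (S n).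
Proof. intro H. apply Rinv_le_contravar. apply lt_0_INR; lia. apply le_INR; lia. Qed.

Lemma arch c : 0 < c -> exists N, / INR (S N) < c.
Proof.
  intro Hc. destruct (archimed_cor1 c Hc) as [N [H1 H2]]. exists N.
  eapply Rle_lt_trans; [|exact H1]. apply Rinv_le_contravar. apply lt_0_INR; lia.
  apply le_INR; lia.
Qed.

Lemma pz x : (forall n, 0 < x n) -> (forall n, x n < / INR (S n)) ->
  exists phi, subseq phi /\ sdec (fun n => x (phi n)).
Proof.
  intros Hp Hb. destruct (mono_sub x) as [phi [Hs [Hd|Hn]]].
  - exists phi; auto.
  - exfalso. destruct (arch (x (phi 0%nat)) (Hp _)) as [N HN].
    assert (H1 := Hn 0%nat (S N) ltac:(lia)). simpl in H1.
    assert (H2 := Hb (phi (S N))).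
    assert (H3 := inv_mono N (phi (S N)) ltac:(pose proof (subseq_ge phi Hs (S N)); lia)).
    lra.
Qed.

Lemma const_lim (u : nat -> R) z : (forall n, z <= u n) -> (forall n, u n < z + / INR (S n)) ->
  forall phi, subseq phi -> ndec (fun n => u (phi n)) -> forall n, u (phi n) = z.
Proof.
  intros Hz Hb phi Hs Hn n.
  destruct (Rle_lt_or_eq_dec _ _ (Hz (phi n))) as [Hl|He]; [|auto].
  exfalso. destruct (arch (u (phi n) - z)) as [N HN]; [lra|].
  set (m := (N + S n)%nat).
  assert (H1 := Hn n m ltac:(unfold m; lia)). simpl in H1.
  assert (H2 := Hb (phi m)).
  assert (H3 := inv_mono N (phi m) ltac:(pose proof (subseq_ge phi Hs m); unfold m in *; lia)).
  lra.
Qed.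

Lemma LBgen (step : R -> R) (u : nat -> R) z :
  (forall n, z <= u n) -> (forall n, u n < z + / INR (S n)) ->
  (forall n, 0 < step (u n)) -> (forall n, step (u n) < / INR (S n)) ->
  exists chi, subseq chi /\ sdec (fun n => u (chi n)) /\ sdec (fun n => step (u (chi n))).
Proof.
  intros Hz Hb Hp Hs. destruct (pz (fun n => step (u n)) Hp Hs) as [phi [Hphi Hd]].
  destruct (mono_sub (fun n => u (phi n))) as [psi [Hpsi [Hd2|Hn2]]].
  - exists (fun n => phi (psi n)). split; [apply subseq_comp; auto|]. split; [exact Hd2|].
    apply (sdec_sub (fun n => step (u (phi n))) psi Hd Hpsi).
  - exfalso.
    assert (He := const_lim u z Hz Hb (fun n => phi (psi n)) (subseq_comp _ _ Hphi Hpsi) Hn2).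
    assert (H := Hd _ _ (Hpsi 0%nat 1%nat ltac:(lia))). simpl in H.
    rewrite (He 0%nat), (He 1%nat) in H. lra.
Qed.

Scheme Eval_mut := Induction for Eval Sort Prop
  with Chain_mut := Induction for Chain Sort Prop.

Section Main.
Variables (k : nat) (f s : R -> R) (g : nat -> R -> R).
Hypothesis Hk : (1 <= k)%nat.
Hypothesis Hf : ordinal_decreasing (fun x => x < 0) f.
Hypothesis Hfp : forall x, x < 0 -> 0 < f x.
Hypothesis Hg : forall i, (1 <= i <= k)%nat -> ordinal_decreasing (fun x => x < 0) (g i).
Hypothesis Hgp : forall i, (1 <= i <= k)%nat -> forall x, x < 0 -> 0 < g i x.
Hypothesis Hs : ordinal_decreasing (fun x => 0 <= x) s.
Hypothesis Hsp : forall x, 0 <= x -> 0 < s x.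

Notation Ev := (Eval k f s g).
Notation Ch := (Chain k f s g).

Lemma det : forall x v, Ev x v -> forall w, Ev x w -> v = w.
Proof.
  apply (Eval_mut k f s g (fun x v _ => forall w, Ev x w -> v = w)
                         (fun x j a _ => forall b, Ch x j b -> a = b)).
  - intros x Hx w H. inversion H; subst; [reflexivity|lra].
  - intros x a Hx c IH Ha w H. inversion H; subst; [lra|].
    rewrite (IH _ H1). reflexivity.
  - intros x a e IH b H. inversion H; subst; [|lia]. apply IH; assumption.
  - intros x j b a Hj c IHc Hb e IHe b' H. inversion H; subst; [lia|].
    rewrite <- (IHc _ H1) in H3. apply IHe; assumption.
Qed.

Lemma Ev_pos x v : Ev x v -> 0 < v.
Proof. intro H. destruct H. apply Hfp; auto. apply (Hgp 1%nat); [lia|auto]. Qed.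

Definition Ms x := epsilon (inhabits 0) (fun v => Ev x v).
Definition Term x := exists v, Ev x v.

Lemma Ms_spec x : Term x -> Ev x (Ms x).
Proof. intro H. apply (epsilon_spec (inhabits 0) (fun v => Ev x v) H). Qed.

Lemma Ms_eq x v : Ev x v -> Ms x = v.
Proof. intro H. apply (det x); [apply Ms_spec; exists v; auto|auto]. Qed.

Lemma Ms_pos x : Term x -> 0 < Ms x.
Proof. intro H. apply (Ev_pos x), Ms_spec, H. Qed.

Fixpoint W (d : nat) (u : R) : R :=
  match d with O => u - s u | S d' => u - g (k - d')%nat (- Ms (W d' u)) end.

Section Z.
Variable z : R.
Hypothesis Hz0 : 0 <= z.
Hypothesis HT : forall y, y < z -> Term y.
Hypothesis HB : ordinal_decreasing (fun y => y < z) Ms.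

Definition Below d u := forall d', (d' <= d)%nat -> W d' u < z.

Lemma chain_build u : forall d, (d < k)%nat -> Below d u -> Ch u (k - d) (Ms (W d u)).
Proof.
  induction d; intros Hd Hb.
  - rewrite Nat.sub_0_r. apply Chain_base. apply Ms_spec, HT. apply (Hb 0%nat). lia.
  - apply Chain_step with (b := Ms (W d u)); [lia| | |].
    + replace (S (k - S d)) with (k - d)%nat by lia. apply IHd; [lia|].
      intros d' Hd'. apply Hb. lia.
    + assert (0 < Ms (W d u)); [|lra]. apply Ms_pos, HT, Hb. lia.
    + replace (S (k - S d)) with (k - d)%nat by lia.
      apply Ms_spec, HT. apply (Hb (S d)). lia.
Qed.

Lemma build u : 0 <= u -> Below (k - 1) u -> Ev u (g 1%nat (- Ms (W (k - 1) u))).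
Proof.
  intros H0 Hb. apply Eval_nonneg; [exact H0| |].
  - replace 1%nat with (k - (k - 1))%nat at 1 by lia. apply chain_build; [lia|exact Hb].
  - assert (0 < Ms (W (k-1) u)); [|lra]. apply Ms_pos, HT, Hb. lia.
Qed.

Lemma PL : forall d, (d < k)%nat -> forall u, sdec u -> (forall n, z <= u n) ->
  (forall n, Below d (u n)) -> ~ sdec (fun n => Ms (W d (u n))).
Proof.
  induction d; intros Hd u Hu Hz Hb Hdec.
  - destruct (od_inc _ Ms (fun n => W 0 (u n)) HB) as [phi [Hphi Hi]].
    { intro n. apply (Hb n 0%nat). lia. }
    { exact Hdec. }
    apply Hs. exists (fun n => u (phi n)). repeat split.
    + intro n. specialize (Hz (phi n)). lra.
    + intro n. apply Hu, Hphi. lia.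
    + intro n. assert (H1 := Hi n (S n) ltac:(lia)). assert (H2 := Hu _ _ (Hphi n (S n) ltac:(lia))).
      simpl in H1. lra.
  - destruct (od_inc _ Ms (fun n => W (S d) (u n)) HB) as [phi [Hphi Hi]].
    { intro n. apply (Hb n). lia. }
    { exact Hdec. }
    assert (Hpos : forall n, 0 < Ms (W d (u n))).
    { intro n. apply Ms_pos, HT, (Hb n). lia. }
    destruct (od_inc (fun x => x < 0) (g (k - d)%nat) (fun n => - Ms (W d (u (phi n)))))
      as [psi [Hpsi Hi2]].
    { apply Hg. lia. }
    { intro n. specialize (Hpos (phi n)). lra. }
    { intros n m Hnm. assert (H1 := Hi n m Hnm). assert (H2 := Hu _ _ (Hphi n m Hnm)).
      simpl in H1. lra. }
    apply (IHd ltac:(lia) (fun n => u (phi (psi n)))).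
    + apply (sdec_sub (fun n => u (phi n)) psi); [apply sdec_sub|]; assumption.
    + intro n; apply Hz.
    + intros n d' Hd'. apply Hb. lia.
    + intros n m Hnm. assert (H := Hi2 n m Hnm). simpl in H. lra.
Qed.

Lemma PL_top u : sdec u -> (forall n, z <= u n) ->
  (forall n, Below (k - 1) (u n)) -> ~ sdec (fun n => Ms (u n)).
Proof.
  intros Hu Hz Hb Hdec.
  assert (HE : forall n, Ms (u n) = g 1%nat (- Ms (W (k - 1) (u n)))).
  { intro n. apply Ms_eq, build; [specialize (Hz n); lra|apply Hb]. }
  assert (Hpos : forall n, 0 < Ms (W (k-1) (u n))).
  { intro n. apply Ms_pos, HT, (Hb n). lia. }
  destruct (od_inc (fun x => x < 0) (g 1%nat) (fun n => - Ms (W (k-1) (u n))))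
    as [psi [Hpsi Hi2]].
  { apply Hg. lia. }
  { intro n. specialize (Hpos n). lra. }
  { intros n m Hnm. assert (H1 := Hdec n m Hnm). simpl in H1. rewrite !HE in H1. exact H1. }
  apply (PL (k - 1) ltac:(lia) (fun n => u (psi n))).
  + apply sdec_sub; assumption.
  + intro n; apply Hz.
  + intros n. apply Hb.
  + intros n m Hnm. assert (H := Hi2 n m Hnm). simpl in H. lra.
Qed.

Lemma Below_S d u : Below d u -> W (S d) u < z -> Below (S d) u.
Proof.
  intros H1 H2 d' Hd'. destruct (Nat.eq_dec d' (S d)) as [->|Hne]; [exact H2|]. apply H1. lia.
Qed.

Lemma LB : forall d, (d < k)%nat -> exists eps, 0 < eps /\
  forall u, z <= u -> u < z + eps -> Below d u.
Proof.
  induction d; intros Hd.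
  - apply NNPP. intro Hn.
    assert (Hc : forall n, exists u, z <= u /\ u < z + / INR (S n) /\ ~ Below 0 u).
    { intro n. apply NNPP. intro H2. apply Hn. exists (/ INR (S n)). split; [apply inv_pos|].
      intros u H3 H4. apply NNPP. intro H5. apply H2. exists u. auto. }
    destruct (functional_choice _ Hc) as [u Hu].
    assert (Hstep : forall n, z <= W 0 (u n)).
    { intro n. destruct (Hu n) as [_ [_ H]]. apply Rnot_lt_le. intro H'. apply H.
      intros d' Hd'. replace d' with 0%nat by lia. exact H'. }
    destruct (LBgen s u z) as [chi [Hchi [H1 H2]]].
    + intro n; apply Hu.
    + intro n; apply Hu.
    + intro n. apply Hsp. destruct (Hu n) as [H _]. lra.
    + intro n. specialize (Hstep n). destruct (Hu n) as [_ [H _]]. simpl in Hstep. lra.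
    + apply Hs. exists (fun n => u (chi n)). repeat split.
      * intro n. destruct (Hu (chi n)) as [H _]. lra.
      * intro n. apply H1. lia.
      * intro n. apply H2. lia.
  - destruct (IHd ltac:(lia)) as [e [He HeB]].
    apply NNPP. intro Hn.
    assert (Hc : forall n, exists u, z <= u /\ u < z + Rmin e (/ INR (S n)) /\ ~ Below (S d) u).
    { intro n. apply NNPP. intro H2. apply Hn. exists (Rmin e (/ INR (S n))).
      split; [apply Rmin_glb_lt; [exact He|apply inv_pos]|].
      intros u H3 H4. apply NNPP. intro H5. apply H2. exists u. auto. }
    destruct (functional_choice _ Hc) as [u Hu].
    assert (HbD : forall n, Below d (u n)).
    { intro n. destruct (Hu n) as [H1 [H2 _]]. apply HeB; [lra|].
      pose proof (Rmin_l e (/ INR (S n))). lra. }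
    assert (Hstep : forall n, z <= W (S d) (u n)).
    { intro n. destruct (Hu n) as [_ [_ H]]. apply Rnot_lt_le. intro H'. apply H.
      apply Below_S; auto. }
    assert (Hpos : forall n, 0 < Ms (W d (u n))).
    { intro n. apply Ms_pos, HT, (HbD n). lia. }
    destruct (LBgen (fun x => g (k - d)%nat (- Ms (W d x))) u z) as [chi [Hchi [H1 H2]]].
    + intro n; apply Hu.
    + intro n. destruct (Hu n) as [_ [H _]]. pose proof (Rmin_r e (/ INR (S n))). lra.
    + intro n. apply Hgp; [lia|]. specialize (Hpos n). lra.
    + intro n. specialize (Hstep n). destruct (Hu n) as [_ [H _]].
      pose proof (Rmin_r e (/ INR (S n))). simpl in Hstep. lra.
    + destruct (od_inc (fun x => x < 0) (g (k - d)%nat) (fun n => - Ms (W d (u (chi n)))))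
        as [psi [Hpsi Hi2]].
      { apply Hg. lia. }
      { intro n. specialize (Hpos (chi n)). lra. }
      { exact H2. }
      apply (PL d ltac:(lia) (fun n => u (chi (psi n)))).
      * apply (sdec_sub (fun n => u (chi n)) psi); assumption.
      * intro n; apply Hu.
      * intro n; apply HbD.
      * intros n m Hnm. assert (H := Hi2 n m Hnm). simpl in H. lra.
Qed.

End Z.
Definition Q x := (forall y, y <= x -> Term y) /\ ordinal_decreasing (fun y => y <= x) Ms.

Lemma Q_down x y : Q x -> y <= x -> Q y.
Proof.
  intros [H1 H2] Hyx. split.
  - intros y' Hy'. apply H1. lra.
  - intros [u [Hu1 Hu2]]. apply H2. exists u. split; [|exact Hu2]. intro n. specialize (Hu1 n). lra.
Qed.

Lemma Q_neg y : y < 0 -> Q y.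
Proof.
  intro Hy. split.
  - intros y' Hy'. exists (f y'). apply Eval_neg. lra.
  - intros [u [Hu1 [Hu2 Hu3]]]. apply Hf. exists u.
    assert (HE : forall n, Ms (u n) = f (u n)).
    { intro n. apply Ms_eq, Eval_neg. specialize (Hu1 n). lra. }
    repeat split.
    + intro n. specialize (Hu1 n). lra.
    + exact Hu2.
    + intro n. rewrite <- !HE. apply Hu3.
Qed.

Lemma Q_all : forall x, Q x.
Proof.
  apply NNPP. intro Hn. apply not_all_ex_not in Hn. destruct Hn as [x1 Hx1].
  destruct (completeness Q) as [z [Hub Hlub]].
  { exists x1. intros x Hx. apply Rnot_lt_le. intro H. apply Hx1. eapply Q_down; [exact Hx|lra]. }
  { exists (-1). apply Q_neg. lra. }
  assert (Hlt : forall y, y < z -> Q y).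
  { intros y Hy. apply NNPP. intro Hq. assert (z <= y); [|lra]. apply Hlub.
    intros x Hx. apply Rnot_lt_le. intro H. apply Hq. eapply Q_down; [exact Hx|lra]. }
  assert (Hz0 : 0 <= z).
  { apply Rnot_lt_le. intro H. assert (z / 2 <= z); [|lra]. apply Hub. apply Q_neg. lra. }
  assert (HT : forall y, y < z -> Term y).
  { intros y Hy. apply (Hlt y Hy). lra. }
  assert (HB : ordinal_decreasing (fun y => y < z) Ms).
  { intros [u [Hu1 [Hu2 Hu3]]]. destruct (Hlt (u 0%nat) (Hu1 0%nat)) as [_ H].
    apply H. exists u. repeat split; auto. apply le_first; auto. }
  destruct (LB z Hz0 HT HB (k - 1) ltac:(lia)) as [e [He HeB]].
  assert (Hq : Q (z + e / 2)).
  { split.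
    - intros y Hy. destruct (Rlt_le_dec y z) as [H|H]; [apply HT; exact H|].
      exists (g 1%nat (- Ms (W (k - 1) y))). apply (build z HT); [lra|]. apply HeB; lra.
    - intros [u [Hu1 [Hu2 Hu3]]].
      destruct (classic (exists N, u N < z)) as [[N HN]|HN].
      + apply HB. exists (fun n => u (N + n)%nat). repeat split.
        * intro n. assert (L2 : u (N + n)%nat <= u N).
          { induction n. rewrite Nat.add_0_r. lra.
            rewrite <- plus_n_Sm. specialize (Hu2 (N + n)%nat). lra. }
          lra.
        * intro n. rewrite <- plus_n_Sm. apply Hu2.
        * intro n. rewrite <- plus_n_Sm. apply Hu3.
      + assert (Hz : forall n, z <= u n).
        { intro n. apply Rnot_lt_le. intro H. apply HN. exists n. exact H. }
        apply (PL_top z Hz0 HT HB u).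
        * apply sdec_succ; exact Hu2.
        * exact Hz.
        * intro n. apply HeB; [apply Hz|]. pose proof (le_first u Hu2 n). pose proof (Hu1 0%nat). lra.
        * apply sdec_succ; exact Hu3. }
  assert (z + e / 2 <= z); [apply Hub; exact Hq|lra].
Qed.

End Main.

Theorem theorem1 (k : nat) (f s : R -> R) (g : nat -> R -> R) :
  (1 <= k)%nat ->
  ordinal_decreasing (fun x => x < 0) f ->
  (forall x, x < 0 -> 0 < f x) ->
  (forall i, (1 <= i <= k)%nat -> ordinal_decreasing (fun x => x < 0) (g i)) ->
  (forall i, (1 <= i <= k)%nat -> forall x, x < 0 -> 0 < g i x) ->
  ordinal_decreasing (fun x => 0 <= x) s ->
  (forall x, 0 <= x -> 0 < s x) ->
  (forall x : R, exists v : R, Eval k f s g x v) /\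
  (forall x v w, Eval k f s g x v -> Eval k f s g x w -> v = w) /\
  (forall M : R -> R, (forall x, Eval k f s g x (M x)) ->
     ordinal_decreasing (fun _ => True) M).
Proof.
  intros Hk Hf Hfp Hg Hgp Hs Hsp.
  pose proof (Q_all k f s g Hk Hf Hfp Hg Hgp Hs Hsp) as HQ.
  split; [|split].
  - intro x. apply (proj1 (HQ x)). lra.
  - intros x v w H1 H2. eapply det; eauto.
  - intros M HM [u [_ [Hu2 Hu3]]].
    apply (proj2 (HQ (u 0%nat))). exists u. repeat split.
    + intro n. apply le_first; auto.
    + exact Hu2.
    + intro n. assert (E : forall x, Ms k f s g x = M x) by (intro x; eapply Ms_eq; eauto).
      rewrite !E. apply Hu3.
Qed.

Print Assumptions theorem1.
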